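(* Let $0<\tau<T$, $\lambda>0$, $\kappa_3\in(0,1)$ and $t_3\in(\tau,T)$. For every $\gamma_3\ge\kappa_3/(t_3-\tau)$, any solution $(x(t),y(t))$ on $[\tau,T]$ of \[ x'=y,\qquad y'=-\lambda a^+(t)g(x) \] with $x(t_3)\le\kappa_3$ and $y(t_3)\ge\gamma_3$ satisfies $x(\tau)\le0$ and $y(\tau)\ge\gamma_3$.
   Context: $a\in L^1(\tau,T)$ with positive part $a^+$. $g\colon\mathbb{R}\to[0,+\infty)$ is the extension by zero outside $[0,1]$ of a locally Lipschitz continuous function $g\colon[0,1]\to[0,+\infty)$ with $g(0)=g(1)=0$, $g(s)>0$ for $0<s<1$ and $\lim_{s\to0^+}g(s)/s=0$. Solutions are in the Carathéodory sense. *)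

(* Defs.v *)
From HB Require Import structures.
From mathcomp Require Import all_boot all_order all_algebra.
From mathcomp Require Import all_classical all_reals all_analysis.
Set Implicit Arguments. Unset Strict Implicit. Unset Printing Implicit Defensive.
Import Order.TTheory GRing.Theory Num.Theory.
Import numFieldNormedType.Exports.
Local Open Scope classical_set_scope.
Local Open Scope ring_scope.

Definition pos_part (R : realType) (a : R -> R) : R -> R :=
  fun t => Num.max (a t) 0.

Definition locally_lipschitz_on01 (R : realType) (g : R -> R) : Prop :=
  forall s, s \in `[0, 1] ->
    exists2 delta : R, 0 < delta &
    exists L : R, forall u v, u \in `[0, 1] -> v \in `[0, 1] ->
      `|u - s| < delta -> `|v - s| < delta ->
      `|g u - g v| <= L * `|u - v|.

(* Standing hypotheses on g : R -> [0,+oo): extension by zero outside [0,1]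
   of a locally Lipschitz g : [0,1] -> [0,+oo), with g(0)=g(1)=0, g>0 on (0,1),
   and g(s)/s -> 0 as s -> 0^+. *)
Definition g_hyp (R : realType) (g : R -> R) : Prop :=
  [/\ (forall s, 0 <= g s),
      (forall s, s \notin `[0, 1] -> g s = 0),
      locally_lipschitz_on01 g,
      (g 0 = 0 /\ g 1 = 0 /\ forall s, 0 < s < 1 -> 0 < g s) &
      ((fun s => g s / s) @ 0^'+ --> 0)].

Definition L1_on (R : realType) (tau T : R) (a : R -> R) : Prop :=
  (@lebesgue_measure R).-integrable `[tau, T] (EFin \o a).

(* (x, y) is a Caratheodory solution on [tau, T] of
     x' = y,  y' = - lam a^+(t) g(x),
   i.e. x, y are absolutely continuous on [tau,T] and the equations hold a.e.;
   equivalently, the right-hand sides are integrable on [tau,T] and the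
   integral equations hold for every t in [tau,T]. *)
Definition carath_solution (R : realType) (tau T lam : R) (a g x y : R -> R)
  : Prop :=
  [/\ (@lebesgue_measure R).-integrable `[tau, T] (EFin \o y),
      (@lebesgue_measure R).-integrable `[tau, T]
         (EFin \o (fun s => - lam * pos_part a s * g (x s))),
      (forall t, t \in `[tau, T] ->
         x t = x tau + \int[@lebesgue_measure R]_(s in `[tau, t]) y s) &
      (forall t, t \in `[tau, T] ->
         y t = y tau + \int[@lebesgue_measure R]_(s in `[tau, t])
                           (- lam * pos_part a s * g (x s)))].

(* Main.v *)
Require Import Defs.
From HB Require Import structures.
From mathcomp Require Import all_boot all_order all_algebra.
From mathcomp Require Import all_classical all_reals all_analysis.
From mathcomp Require Import measurable_realfun.
Import Order.TTheory GRing.Theory Num.Theory.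
Import numFieldNormedType.Exports.
Local Open Scope classical_set_scope.
Local Open Scope ring_scope.

Theorem lemma2p4 (R : realType) (tau T : R) (a g : R -> R)
  (lam kappa3 t3 gamma3 : R) (x y : R -> R) :
  0 < tau -> tau < T ->
  L1_on tau T a -> g_hyp g ->
  0 < lam ->
  0 < kappa3 < 1 ->
  tau < t3 < T ->
  kappa3 / (t3 - tau) <= gamma3 ->
  carath_solution tau T lam a g x y ->
  x t3 <= kappa3 -> gamma3 <= y t3 ->
  x tau <= 0 /\ gamma3 <= y tau.
Proof.
move=> _ tauT _ [g0 _ _ _ _] lam0 /andP[k0 _] /andP[tt3 t3T] hk
  [iy iF hx hy] xt3 yt3.
set f := (fun s => - lam * pos_part a s * g (x s)).
have f0 : forall s, f s <= 0.
  move=> s; rewrite /f -mulrA mulNr oppr_le0.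
  apply: mulr_ge0; first exact: ltW.
  apply: mulr_ge0 => //.
  by rewrite /pos_part le_max lexx orbT.
have sub3 : `[tau, t3] `<=` `[tau, T].
  by apply: subset_itvl; rewrite bnd_simp ltW.
have if3 : (@lebesgue_measure R).-integrable `[tau, t3] (EFin \o f).
  exact: integrableS iF.
have iy3 : (@lebesgue_measure R).-integrable `[tau, t3] (EFin \o y).
  exact: integrableS iy.
have ymon : forall t, t \in `[tau, t3] -> y t3 <= y t.
  move=> t ht.
  have htT : t \in `[tau, T].
    move: ht; rewrite !in_itv /= => /andP[-> h]; exact: (le_trans h (ltW t3T)).
  have h3 : t3 \in `[tau, T] by rewrite in_itv /= (ltW tt3) (ltW t3T).
  rewrite (hy _ h3) (hy _ htT).
  rewrite lerD2l -subr_le0.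
  move: ht; rewrite in_itv /= => /andP[ht1 ht2].
  rewrite (@Rintegral_itvB R f (BLeft tau) (BRight t3) t) ?bnd_simp //.
  have : (\int[@lebesgue_measure R]_(s in `]t, t3]) f s <= \int[@lebesgue_measure R]_(s in `]t, t3]) (cst 0 s)).
    apply: le_Rintegral => //.
      apply: integrableS if3 => //; apply: subset_itvr; rewrite bnd_simp //.
    exact: integrable0.
  by rewrite Rintegral_cst // mul0r.
split; last first.
  by apply: le_trans (ymon _ _); rewrite // in_itv /= lexx ltW.
have := hx t3; rewrite in_itv /= ltW // ltW // => /(_ isT) ex.
have : \int[@lebesgue_measure R]_(s in `[tau, t3]) gamma3 <= \int[@lebesgue_measure R]_(s in `[tau, t3]) y s.
  apply: le_Rintegral => //.
    apply/integrableP; split; first by apply/measurable_EFinP; exact: measurable_cst.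
    rewrite (eq_integral (fun=> `|gamma3|%:E)) ?integral_cst //.
    have hm := lebesgue_measure_itv `[tau, t3]; rewrite /= lte_fin tt3 in hm.
    rewrite [X in (_ * X)%E]hm -EFinM ltry //.
  move=> s hs; apply: le_trans yt3 (ymon _ _); exact: hs.

have hm := lebesgue_measure_itv `[tau, t3]; rewrite /= lte_fin tt3 in hm.
rewrite Rintegral_cst // [X in fine X]hm /= => hint.
have hk2 : kappa3 <= gamma3 * (t3 - tau).
  by rewrite -ler_pdivrMr ?subr_gt0.
have : x tau = x t3 - \int[@lebesgue_measure R]_(s in `[tau, t3]) y s.
  by rewrite ex addrK.
move=> ->; rewrite subr_le0; exact: (le_trans xt3 (le_trans hk2 hint)).
Qed.
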